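(* Let $Q$ be a finite, simple, commutative, automorphic loop of exponent $2$ which is not associative. Let $U$ be the socle of $\mathrm{Mlt}(Q)$, a regular normal elementary abelian $2$-subgroup, viewed as a $GF(2)$-vector space (written additively) on which $\mathrm{Inn}(Q)$ acts linearly by conjugation. For $x\in Q$ write $R_x=h_xu_x$ with unique $h_x\in\mathrm{Inn}(Q)$ and $u_x\in U$; for $u\in U$ let $h_u=h_x$ where $x$ is the unique element with $u_x=u$. Define $u\circ v=u^{h_v}+v$ on $U$. Then $\mathrm{Inn}(U,\circ)=\mathrm{Inn}(Q)=\langle h_x\mid x\in Q\rangle$ (where $\mathrm{Inn}(U,\circ)$ acts on $U$ and $\mathrm{Inn}(Q)$ is identified with its linear action on $U$).
   Context: A loop is a set with a binary operation in which left and right division are uniquely solvable and which has a neutral element $1$. $R_a:x\mapsto xa$; $\mathrm{Mlt}(Q)$ is generated by all left and right translations; $\mathrm{Inn}(Q)$ is the stabilizer of $1$ in $\mathrm{Mlt}(Q)$; $Q$ is automorphic if $\mathrm{Inn}(Q)\le\mathrm{Aut}(Q)$; exponent $2$ means $x^2=1$ for all $x$; simple means no nontrivial proper normal subloops. For such $Q$, $\mathrm{Mlt}(Q)$ is a primitive group of affine type, $\mathrm{Mlt}(Q)=\mathrm{Inn}(Q)U$ with $U\cap\mathrm{Inn}(Q)=1$, and $Q$ is identified with $U$ via $u\leftrightarrow 1u$; then the action of $h\in\mathrm{Inn}(Q)$ on points corresponds to $u\mapsto u^h=h^{-1}uh$, a $GF(2)$-linear map. Maps act on the right, composed left to right. The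 map $x\mapsto u_x$ is a bijection $Q\to U$, and $(U,\circ)$ is a loop isomorphic to $Q$. *)

(* Defs.v *)
From mathcomp Require Import all_boot all_fingroup all_solvable.
Set Implicit Arguments. Unset Strict Implicit. Unset Printing Implicit Defensive.

Local Open Scope group_scope.

Section Loops.
Variables (T : finType) (op : T -> T -> T) (e : T).

(* Left and right division uniquely solvable (on a finite set: translations
   are bijective) and e is a two-sided neutral element. *)
Definition is_loop : Prop :=
  [/\ forall x, op e x = x, forall x, op x e = x,
      forall a, injective (op a) & forall a, injective (fun x => op x a)].

Definition loop_comm : Prop := forall x y, op x y = op y x.
Definition loop_assoc : Prop := forall x y z, op x (op y z) = op (op x y) z.
Definition loop_exp2 : Prop := forall x, op x x = e.

(* Translations as permutations (maps act on the right; in MathComp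
   (p * q) x = q (p x), i.e. composition left to right).  *)
Definition Rp (a : T) : {perm T} :=
  odflt 1 [pick p : {perm T} | [forall x, p x == op x a]].
Definition Lp (a : T) : {perm T} :=
  odflt 1 [pick p : {perm T} | [forall x, p x == op a x]].

Definition Mlt : {set {perm T}} :=
  << [set Rp a | a : T] :|: [set Lp a | a : T] >>.
Definition Inn : {set {perm T}} := [set p in Mlt | p e == e].

Definition loop_automorphic : Prop :=
  forall p, p \in Inn -> forall x y, p (op x y) = op (p x) (p y).

Definition subloop (N : {set T}) : Prop :=
  [/\ e \in N,
      forall a b, a \in N -> b \in N -> op a b \in N,
      forall a b x, a \in N -> b \in N -> op a x = b -> x \in N &
      forall a b x, a \in N -> b \in N -> op x a = b -> x \in N].

Definition normal_subloop (N : {set T}) : Prop :=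
  subloop N /\
  forall x y,
  [/\ [set op x n | n in N] = [set op n x | n in N],
      [set op x (op y n) | n in N] = [set op (op x y) n | n in N] &
      [set op (op n x) y | n in N] = [set op n (op x y) | n in N]].

Definition loop_simple : Prop :=
  forall N, normal_subloop N -> N = [set e] \/ N = setT.

End Loops.

Definition socle (gT : finGroupType) (G : {set gT}) : {set gT} :=
  << \bigcup_(M : {group gT} | (M \subset G) && minnormal M G) M >>.

Section UDecomp.
Variables (T : finType) (op : T -> T -> T) (e : T) (U : {group {perm T}}).

Definition h_of (x : T) : {perm T} :=
  odflt 1 [pick h in Inn op e | [exists u in U, Rp op x == h * u]].
Definition u_of (x : T) : {perm T} :=
  odflt 1 [pick u in U | [exists h in Inn op e, Rp op x == h * u]].

Definition h_U (u : {perm T}) : {perm T} :=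
  if [pick x | u_of x == u] is Some x then h_of x else 1.

(* u o v := u^{h_v} + v, the addition of U being the group product and
   u ^ h = h^-1 * u * h the conjugation. *)
Definition opU (u v : subg_of U) : subg_of U :=
  subg U ((sgval u ^ h_U (sgval v)) * sgval v).

End UDecomp.

(* Main.v *)
Require Import Defs.
From mathcomp Require Import all_boot all_fingroup all_solvable.
Set Implicit Arguments. Unset Strict Implicit. Unset Printing Implicit Defensive.
Local Open Scope group_scope.

Section Gen.
Variables (T : finType) (op : T -> T -> T) (e : T).

Lemma RpE_gen a : (exists p : {perm T}, forall x, p x = op x a) ->
  forall x, Rp op a x = op x a.
Proof.
case=> p Hp x; rewrite /Rp; case: pickP => [q /forallP H | H].
  exact/eqP.
by move: (H p) => /forallP []; move=> y; rewrite Hp.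
Qed.

Lemma LpE_gen a : (exists p : {perm T}, forall x, p x = op a x) ->
  forall x, Lp op a x = op a x.
Proof.
case=> p Hp x; rewrite /Lp; case: pickP => [q /forallP H | H].
  exact/eqP.
by move: (H p) => /forallP []; move=> y; rewrite Hp.
Qed.

Lemma Inn_group_set : group_set (Inn op e).
Proof.
apply/group_setP; split; first by rewrite inE group1 perm1 eqxx.
move=> x y; rewrite !inE => /andP[Hx /eqP Hxe] /andP[Hy /eqP Hye].
by rewrite groupM // permM Hxe Hye eqxx.
Qed.

Canonical InnG := Group Inn_group_set.

Lemma Rp_Mlt a : Rp op a \in Mlt op.
Proof. by apply: mem_gen; rewrite inE; apply/orP; left; apply: imset_f. Qed.
Lemma Lp_Mlt a : Lp op a \in Mlt op.
Proof. by apply: mem_gen; rewrite inE; apply/orP; right; apply: imset_f. Qed.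

End Gen.
Section Main.
Variables (T : finType) (op : T -> T -> T) (e : T) (U : {group {perm T}}).
Hypothesis Hloop : is_loop op e.
Hypothesis HUn : U <| Mlt op.
Hypothesis Htr : [transitive U, on [set: T] | 'P].
Hypothesis Hreg : forall u, u \in U -> u e = e -> u = 1.

Lemma RpE a x : Rp op a x = op x a.
Proof.
case: Hloop => _ _ _ Hi; apply: RpE_gen.
by exists (perm (Hi a)) => y; rewrite permE.
Qed.
Lemma LpE a x : Lp op a x = op a x.
Proof.
case: Hloop => _ _ Hi _; apply: LpE_gen.
by exists (perm (Hi a)) => y; rewrite permE.
Qed.

Lemma Uuniq u v : u \in U -> v \in U -> u e = v e -> u = v.
Proof.
move=> Hu Hv Huv.
have := @Hreg (u * v^-1); rewrite groupM ?groupV // permM Huv -permM mulgV perm1.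
by move=> /(_ isT erefl) /(congr1 (fun w => w * v)); rewrite mulgKV mul1g.
Qed.

Lemma UsubM : U \subset Mlt op. Proof. exact: normal_sub. Qed.
Lemma MsubN : Mlt op \subset 'N(U). Proof. exact: normal_norm. Qed.

Lemma Uex x : exists2 u, u \in U & u e = x.
Proof.
have [u Hu ->] := atransP2 Htr (in_setT e) (in_setT x).
by exists u.
Qed.

Lemma decomp_ex x : exists h, exists u,
  [/\ h \in Inn op e, u \in U & Rp op x = h * u].
Proof.
have [u Hu Hue] := Uex x.
exists (Rp op x * u^-1), u; split => //; last by rewrite mulgKV.
rewrite inE groupM ?groupV ?Rp_Mlt ?(subsetP UsubM) //=.
case: Hloop => H1 _ _ _.
by rewrite permM RpE H1 -Hue -permM mulgV perm1.
Qed.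

Lemma decomp_e h u x : h \in Inn op e -> u \in U -> Rp op x = h * u -> u e = x.
Proof.
move=> Hh Hu Hx; case: Hloop => H1 _ _ _.
move: Hh; rewrite inE => /andP[_ /eqP Hhe].
by rewrite -Hhe -permM -Hx RpE H1.
Qed.

Lemma u_ofU x : u_of op e U x \in U.
Proof.
rewrite /u_of; case: pickP => [u /andP[]//|H].
have [h [u [Hh Hu Hx]]] := decomp_ex x.
move: (H u); rewrite Hu /=; case/existsP; exists h; rewrite Hh Hx eqxx //.
Qed.

Lemma u_ofe x : u_of op e U x e = x.
Proof.
rewrite /u_of; case: pickP => [u /andP[Hu /existsP[h /andP[Hh /eqP Hx]]]|H].
  exact: decomp_e Hx.
have [h [u [Hh Hu Hx]]] := decomp_ex x.
move: (H u); rewrite Hu /=; case/existsP; exists h; rewrite Hh Hx eqxx //.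
Qed.

Lemma u_ofE u x : u \in U -> u e = x -> u_of op e U x = u.
Proof. by move=> Hu Hx; apply: Uuniq; rewrite ?u_ofU ?u_ofe. Qed.

Lemma h_ofI x : h_of op e U x \in Inn op e.
Proof.
rewrite /h_of; case: pickP => [h /andP[]//|H].
have [h [u [Hh Hu Hx]]] := decomp_ex x.
move: (H h); rewrite Hh /=; case/existsP; exists u; rewrite Hu Hx eqxx //.
Qed.

Lemma RpD x : Rp op x = h_of op e U x * u_of op e U x.
Proof.
rewrite /h_of; case: pickP => [h /andP[Hh /existsP[u /andP[Hu /eqP Hx]]]|H].
  by rewrite Hx (u_ofE Hu (decomp_e Hh Hu Hx)).
have [h [u [Hh Hu Hx]]] := decomp_ex x.
move: (H h); rewrite Hh /=; case/existsP; exists u; rewrite Hu Hx eqxx //.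
Qed.

Lemma InnM : Inn op e \subset Mlt op.
Proof. by apply/subsetP => p; rewrite inE => /andP[]. Qed.
Lemma Inne h : h \in Inn op e -> h e = e.
Proof. by rewrite inE => /andP[_ /eqP]. Qed.

Lemma h_UE u : u \in U -> h_U op e U u = h_of op e U (u e).
Proof.
move=> Hu; rewrite /h_U; case: pickP => [x /eqP Hx|H].
  by rewrite -Hx u_ofe.
by move: (H (u e)); rewrite (u_ofE Hu) ?eqxx.
Qed.

Lemma conjU u h : u \in U -> h \in Inn op e -> u ^ h \in U.
Proof.
move=> Hu Hh; rewrite memJ_norm //; apply: (subsetP MsubN).
exact: (subsetP InnM).
Qed.

Lemma conje u h : h \in Inn op e -> (u ^ h) e = h (u e).
Proof.
move=> Hh; rewrite conjgE !permM.
have: h^-1 e = e by rewrite -{1}(Inne Hh) -permM mulgV perm1.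
by move=> ->.
Qed.

Definition psi (x : T) : subg_of U := subg U (u_of op e U x).
Definition phi (u : subg_of U) : T := sgval u e.

Lemma phiK : cancel psi phi.
Proof. by move=> x; rewrite /phi /psi subgK ?u_ofU ?u_ofe. Qed.
Lemma psiK : cancel phi psi.
Proof.
move=> u; rewrite /phi /psi (u_ofE (subgP u) (erefl _)); exact: sgvalK.
Qed.

Lemma psiM x y : psi (op x y) = @opU T op e U (psi x) (psi y).
Proof.
rewrite /opU /psi !subgK ?u_ofU // h_UE ?u_ofU // u_ofe.
congr (subg U _); apply: u_ofE.
  by rewrite groupM ?u_ofU // conjU ?u_ofU ?h_ofI.
by rewrite permM conje ?h_ofI // u_ofe -permM -RpD RpE.
Qed.

Local Notation opUU := (@opU T op e U).
Lemma tr_inj (p : {perm T}) : injective (fun s => psi (p (phi s))).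
Proof.
by move=> s1 s2 /(can_inj phiK) /perm_inj /(can_inj psiK).
Qed.

Definition tr (p : {perm T}) : {perm (subg_of U)} := perm (@tr_inj p).

Lemma trE p s : tr p s = psi (p (phi s)). Proof. by rewrite permE. Qed.

Lemma trM : {in [set: {perm T}] &, {morph tr : x y / x * y}}.
Proof. by move=> p q _ _; apply/permP => s; rewrite permM !trE phiK permM. Qed.

Definition trm := Morphism trM.

Lemma trRp a : Rp opUU (psi a) = tr (Rp op a).
Proof.
have H s : tr (Rp op a) s = opUU s (psi a).
  by rewrite trE RpE psiM psiK.
apply/permP => s; rewrite H; apply: RpE_gen.
by exists (tr (Rp op a)).
Qed.

Lemma trLp a : Lp opUU (psi a) = tr (Lp op a).
Proof.
have H s : tr (Lp op a) s = opUU (psi a) s.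
  by rewrite trE LpE psiM psiK.
apply/permP => s; rewrite H; apply: LpE_gen.
by exists (tr (Lp op a)).
Qed.

Lemma MltE : Mlt opUU = trm @* Mlt op.
Proof.
rewrite /Mlt morphim_gen ?subsetT // morphimEsub ?subsetT // imsetU.
congr (<< _ :|: _ >>); apply/setP => p; apply/imsetP/imsetP.
- by case=> b _ ->; exists (Rp op (phi b)); [exact: imset_f | rewrite -[RHS]/(tr _) -trRp psiK].
- by case=> q /imsetP[a _ ->] ->; exists (psi a); rewrite ?trRp.
- by case=> b _ ->; exists (Lp op (phi b)); [exact: imset_f | rewrite -[RHS]/(tr _) -trLp psiK].
- by case=> q /imsetP[a _ ->] ->; exists (psi a); rewrite ?trLp.
Qed.

Lemma psie : psi e = 1.
Proof.
apply: val_inj; rewrite /= subgK ?u_ofU //.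
by apply: u_ofE; rewrite ?group1 ?perm1.
Qed.

Lemma InnE : Inn opUU 1 = tr @: Inn op e.
Proof.
apply/setP => p; rewrite inE MltE morphimEsub ?subsetT //.
apply/andP/imsetP.
- case=> /imsetP[q Hq ->] /eqP; rewrite trE -psie phiK => /(can_inj phiK) Hqe.
  by exists q => //; rewrite inE Hq Hqe eqxx.
- case=> q; rewrite inE => /andP[Hq /eqP Hqe] ->; split.
    by apply/imsetP; exists q.
  by rewrite trE -psie phiK Hqe.
Qed.

Lemma tr_conj h u : h \in Inn op e -> sgval (tr h u) = sgval u ^ h.
Proof.
move=> Hh; rewrite trE /psi subgK ?u_ofU //.
apply: u_ofE; first by rewrite conjU ?subgP.
by rewrite conje.
Qed.



Lemma InnGen (Hcomm : loop_comm op) : Inn op e = << [set h_of op e U x | x : T] >>.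
Proof.
set H := << _ >>.
have HI : H \subset Inn op e.
  by rewrite gen_subG; apply/subsetP => _ /imsetP[x _ ->]; exact: h_ofI.
apply/eqP; rewrite eqEsubset HI andbT.
have HN : H \subset 'N(U) := subset_trans HI (subset_trans InnM MsubN).
have HM : Mlt op \subset H <*> U.
  rewrite [Mlt op]/Mlt gen_subG.
  change ([set Rp op a | a in T] :|: [set Lp op a | a in T] \subset H <*> U); rewrite norm_joinEl //.
  have HR a : Rp op a \in H * U.
    rewrite RpD; apply: mem_mulg; last exact: u_ofU.
    by apply: mem_gen; apply: imset_f.
  apply/subsetP => p; rewrite inE => /orP[] /imsetP[a _ ->] //.
  have -> : Lp op a = Rp op a by apply/permP => x; rewrite LpE RpE Hcomm.
  by [].
apply/subsetP => g Hg.
rewrite norm_joinEl // in HM.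
have /mulsgP[k u Hk Hu Eg] := subsetP HM g (subsetP InnM g Hg).
have Hu1 : u = 1.
  apply: Hreg => //; move: (Inne Hg); rewrite Eg permM.
  by rewrite (Inne (subsetP HI k Hk)).
by rewrite Eg Hu1 mulg1.
Qed.

Lemma final (Hcomm : loop_comm op) :
  Inn (@opU T op e U) 1 =
    [set p : {perm (subg_of U)} |
       [exists h in Inn op e, [forall u, sgval (p u) == sgval u ^ h]]]
  /\ Inn op e = << [set h_of op e U x | x : T] >>.
Proof.
split; last exact: InnGen.
rewrite InnE; apply/setP => p; rewrite inE; apply/imsetP/existsP.
  case=> h Hh Ep; exists h; rewrite Hh /=; apply/forallP => u.
  by rewrite Ep tr_conj.
case=> h /andP[Hh /forallP Hp]; exists h => //; apply/permP => u.
have := Hp u; rewrite -(tr_conj u Hh) => /eqP; exact: val_inj.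
Qed.

End Main.

Theorem lemma4p1 (T : finType) (op : T -> T -> T) (e : T)
  (U : {group {perm T}}) :
  is_loop op e -> loop_simple op e -> loop_comm op ->
  loop_automorphic op e -> loop_exp2 op e -> ~ loop_assoc op ->
  U :=: socle (Mlt op) ->
  (* the descriptive facts stated for U: regular, normal, elementary abelian *)
  U <| Mlt op -> 2.-abelem U -> [transitive U, on [set: T] | 'P] ->
  (forall u, u \in U -> u e = e -> u = 1) ->
  (* Inn(U, o) = Inn(Q) acting by conjugation on U, and Inn(Q) = <h_x> *)
  Inn (@opU T op e U) 1 =
    [set p : {perm (subg_of U)} |
       [exists h in Inn op e, [forall u, sgval (p u) == sgval u ^ h]]]
  /\ Inn op e = << [set h_of op e U x | x : T] >>.
Proof.
move=> Hl _ Hc _ _ _ _ Hn _ Ht Hr.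
exact: final.
Qed.
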